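(* Let $\epsilon>0$ be fixed. Define the randomized mechanism $\mathcal{M}$ (BiSample-MD) whose input is a pair $(v,\epsilon_u)$ with $v\in[-1,1]$ and $\epsilon_u\in\mathbb{R}$, as follows. First set $v'=v$ if $\epsilon\le\epsilon_u$ and $v'=\bot$ (a null value) otherwise. Sample $s\in\{0,1\}$ uniformly at random. If $s=0$, generate a Bernoulli variable $b\in\{0,1\}$ with $$\Pr[b=1]=\begin{cases}\frac{1-e^{\epsilon}}{1+e^{\epsilon}}\cdot\frac{v'}{2}+\frac12 & \text{if } v'\in[-1,1],\\[2pt] \frac{1}{e^{\epsilon}+1} & \text{if } v'=\bot;\end{cases}$$ if $s=1$, generate a Bernoulli variable $b\in\{0,1\}$ with $$\Pr[b=1]=\begin{cases}\frac{e^{\epsilon}-1}{e^{\epsilon}+1}\cdot\frac{v'}{2}+\frac12 & \text{if } v'\in[-1,1],\\[2pt] \frac{1}{e^{\epsilon}+1} & \text{if } v'=\bot.\end{cases}$$ Output $\langle s,b\rangle$. Then $\mathcal{M}$ satisfies $\epsilon$-local differential privacy: for any two inputs $t_1,t_2$ and any output $o\in\{0,1\}\times\{0,1\}$, $\Pr[\mathcal{M}(t_1)=o]\le e^{\epsilon}\Pr[\mathcal{M}(t_2)=o]$.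
   Context: A randomized mechanism $\mathcal{M}$ satisfies $\epsilon$-local differential privacy ($\epsilon$-LDP) if for every two inputs $t_1,t_2$ in its domain and every output $t^*$ in its range, $\Pr[\mathcal{M}(t_1)=t^*]\le \exp(\epsilon)\Pr[\mathcal{M}(t_2)=t^*]$. Here $\epsilon_u$ models the user's privacy preference: the user reveals the real value only if the offered budget $\epsilon$ is at most $\epsilon_u$. *)

(* Defs.v *)
From Stdlib Require Import Reals Lra.
Open Scope R_scope.

(* The perturbed value v': Some v (a value in [-1,1]) or None (= bottom). *)
Definition vprime (eps v eps_u : R) : option R :=
  if Rle_dec eps eps_u then Some v else None.

Definition prob_b1 (eps : R) (s : bool) (v' : option R) : R :=
  match v' with
  | Some x =>
      if s then (exp eps - 1) / (exp eps + 1) * (x / 2) + 1 / 2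
      else (1 - exp eps) / (1 + exp eps) * (x / 2) + 1 / 2
  | None => 1 / (exp eps + 1)
  end.

(* Output probability of BiSample-MD on input (v, eps_u):
   Pr[M(v,eps_u) = <s,b>] = Pr[s] * Pr[b | s] with s uniform on {0,1}
   (true encodes 1, false encodes 0). *)
Definition bisample_md_prob (eps v eps_u : R) (s b : bool) : R :=
  let p := prob_b1 eps s (vprime eps v eps_u) in
  (1 / 2) * (if b then p else 1 - p).

(* Main.v *)
Require Import Defs.
From Stdlib Require Import Reals Lra.
Open Scope R_scope.

Lemma prob_range (eps : R) (Heps : 0 < eps) (s : bool) (v eu : R)
  (Hv : -1 <= v <= 1) :
  let p := prob_b1 eps s (vprime eps v eu) in
  1 / (exp eps + 1) <= p <= exp eps / (exp eps + 1).
Proof.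
  assert (He : 1 < exp eps) by (rewrite <- exp_0; apply exp_increasing; lra).
  simpl. unfold vprime, prob_b1.
  assert (Hp : 0 < exp eps + 1) by lra.
  destruct (Rle_dec eps eu).
  - destruct s.
    + replace ((exp eps - 1) / (exp eps + 1) * (v / 2) + 1 / 2)
        with (((exp eps - 1) * v + exp eps + 1) / 2 / (exp eps + 1)) by (field; lra).
      split; unfold Rdiv; apply Rmult_le_compat_r; try (left; apply Rinv_0_lt_compat; lra); nra.
    + replace ((1 - exp eps) / (1 + exp eps) * (v / 2) + 1 / 2)
        with (((1 - exp eps) * v + exp eps + 1) / 2 / (exp eps + 1)) by (field; lra).
      split; unfold Rdiv; apply Rmult_le_compat_r; try (left; apply Rinv_0_lt_compat; lra); nra.
  - split; unfold Rdiv; apply Rmult_le_compat_r; try (left; apply Rinv_0_lt_compat; lra); lra.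
Qed.

Theorem theorem4 (eps : R) (Heps : 0 < eps)
  (v1 eu1 v2 eu2 : R)
  (Hv1 : -1 <= v1 <= 1) (Hv2 : -1 <= v2 <= 1)
  (s b : bool) :
  bisample_md_prob eps v1 eu1 s b <= exp eps * bisample_md_prob eps v2 eu2 s b.
Proof.
  assert (He : 1 < exp eps) by (rewrite <- exp_0; apply exp_increasing; lra).
  pose proof (prob_range eps Heps s v1 eu1 Hv1) as H1.
  pose proof (prob_range eps Heps s v2 eu2 Hv2) as H2.
  simpl in H1, H2. unfold bisample_md_prob.
  set (p := prob_b1 eps s (vprime eps v1 eu1)) in *.
  set (q := prob_b1 eps s (vprime eps v2 eu2)) in *.
  assert (Hp : 0 < exp eps + 1) by lra.
  assert (A : 1 - 1 / (exp eps + 1) = exp eps / (exp eps + 1)) by (field; lra).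
  assert (B : exp eps * (1 / (exp eps + 1)) = exp eps / (exp eps + 1)) by (field; lra).
  destruct b; nra.
Qed.
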